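(* Consider $N$ heterogeneous agents $x_i(k+1)=A_ix_i(k)+B_iu_i(k)$, $y_i(k)=C_ix_i(k)\in\mathbb{R}^p$, with local measurements $z_i(k)=C_i^mx_i(k)$, where for each $i$: $(A_i,B_i)$ stabilizable, $(C_i,A_i)$ detectable, $(C_i,A_i,B_i)$ right-invertible, $(C_i^m,A_i)$ detectable. Consider an exosystem $x_r(k+1)=A_rx_r(k)$, $y_r(k)=C_rx_r(k)$ with $(C_r,A_r)$ observable and all eigenvalues of $A_r$ in the closed unit disc. Let $(\check C_r,\check A_r,\check B_r)$ be a triple such that $\check x_r(k+1)=\check A_r\check x_r(k)$, $y_r(k)=\check C_r\check x_r(k)$ reproduces every output $y_r$ of the exosystem for a suitable initial condition, whose eigenvalues are those of $A_r$ together with possibly additional zeros, and which is invertible of uniform rank $n_q$ with no invariant zeros. Suppose for each $i$ a pre-compensator $\xi_i(k+1)=A_{i,h}\xi_i+B_{i,h}z_i+E_{i,h}v_i$, $u_i=C_{i,h}\xi_i+D_{i,h}v_i$ is given such that the interconnection reads $\bar x_i(k+1)=\check A_r\bar x_i(k)+\check B_r(v_i(k)+d_i(k))$, $y_i(k)=\check C_r\bar x_i(k)$, with $\omega_i(k+1)=A_{i,s}\omega_i(k)$, $d_i=C_{i,s}\omega_i$, $A_{i,s}$ Schur stable. Let $K,H$ be such that $\check A_r-\check B_rK$ and $\check A_r-H\check C_r$ are Schur stable, and apply the protocol $$\begin{aligned}\xi_i(k+1)&=A_{i,h}\xi_i(k)+B_{i,h}z_i(k)-E_{i,h}K\eta_i(k),\\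 \hat x_i(k+1)&=\check A_r\hat x_i(k)+H(\bar\zeta_i(k)-\check C_r\hat x_i(k))-\check B_rK\check\zeta_i(k),\\ \eta_i(k+1)&=(\check A_r-\check B_rK)\eta_i(k)+\check A_r\hat x_i(k)-\check A_r\check\zeta_i(k),\\ u_i(k)&=C_{i,h}\xi_i(k)-D_{i,h}K\eta_i(k),\end{aligned}$$ where $\bar\zeta_i(k)=\frac{1}{2+d_{in}(i)}\big(\sum_{j}a_{ij}(y_i(k)-y_j(k))+\iota_i(y_i(k)-y_r(k))\big)$ and $\check\zeta_i(k)=\eta_i(k)-\sum_j\bar d_{ij}\eta_j(k)$. Then for any nonempty node set $\mathscr C$, any $N$, any graph in $\mathbb{G}^N_{\mathscr C}$, all initial conditions and all exosystem initial conditions $x_r(0)$, regulated output synchronization holds: $\lim_{k\to\infty}(y_i(k)-y_r(k))=0$ for all $i$.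
   Context: The network is a weighted directed graph on nodes $\{1,\dots,N\}$ with adjacency matrix $[a_{ij}]$, $a_{ij}\ge0$, $a_{ii}=0$ ($a_{ij}>0$ means an edge from $j$ to $i$), Laplacian $L$ ($\ell_{ii}=\sum_k a_{ik}$, $\ell_{ij}=-a_{ij}$), and $D_{in}=\operatorname{diag}\{d_{in}(i)\}$ with $d_{in}(i)=\sum_ja_{ij}$. A nonempty node set $\mathscr C$ (root set) consists of agents that receive $y_i-y_r$; $\iota_i=1$ if $i\in\mathscr C$ and $0$ otherwise. $\mathbb{G}^N_{\mathscr C}$ is the set of graphs on $N$ nodes such that every node is a member of a directed tree whose root lies in $\mathscr C$. $\bar L=L+\operatorname{diag}\{\iota_i\}$ and $\bar D=[\bar d_{ij}]=I-(2I+D_{in})^{-1}\bar L$. Schur stable means all eigenvalues in the open unit disc. *)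

(* Defs.v *)
From HB Require Import structures.
From mathcomp Require Import all_boot all_order all_algebra.
From mathcomp Require Import complex.
From mathcomp Require Import all_classical all_reals all_analysis.

Set Implicit Arguments.
Unset Strict Implicit.
Unset Printing Implicit Defensive.

Import numFieldNormedType.Exports.
Import Order.TTheory GRing.Theory Num.Theory.
Local Open Scope ring_scope.

Section LinearSystems.
Variable R : realType.

Definition mxC (m n : nat) (A : 'M[R]_(m, n)) : 'M[R[i]]_(m, n) :=
  map_mx (fun x : R => (x%:C)%C) A.

Definition schur_stable (n : nat) (A : 'M[R]_n) : Prop :=
  forall z : R[i], eigenvalue (mxC A) z -> `|z| < 1.

Definition eigs_in_closed_disc (n : nat) (A : 'M[R]_n) : Prop :=
  forall z : R[i], eigenvalue (mxC A) z -> `|z| <= 1.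

Definition stabilizable (n m : nat) (A : 'M[R]_n) (B : 'M[R]_(n, m)) : Prop :=
  exists F : 'M[R]_(m, n), schur_stable (A + B *m F).

Definition detectable (n p : nat) (C : 'M[R]_(p, n)) (A : 'M[R]_n) : Prop :=
  exists L : 'M[R]_(n, p), schur_stable (A + L *m C).

Definition observable (n p : nat) (C : 'M[R]_(p, n)) (A : 'M[R]_n) : Prop :=
  forall x : 'cV[R]_n, (forall k : nat, C *m (A ^+ k) *m x = 0) -> x = 0.

Definition sysmx (n m p : nat) (C : 'M[R]_(p, n)) (A : 'M[R]_n)
  (B : 'M[R]_(n, m)) (z : R[i]) : 'M[R[i]]_(n + p, n + m) :=
  block_mx (z%:M - mxC A) (- mxC B) (mxC C) 0.

Definition normal_rank (n m p : nat) (C : 'M[R]_(p, n)) (A : 'M[R]_n)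
  (B : 'M[R]_(n, m)) (r : nat) : Prop :=
  (exists z : R[i], \rank (sysmx C A B z) = r) /\
  (forall z : R[i], (\rank (sysmx C A B z) <= r)%N).

(* (C,A,B) right-invertible: transfer matrix of full row (normal) rank p,
   i.e. normal rank of the system matrix equals n + p. *)
Definition right_invertible (n m p : nat) (C : 'M[R]_(p, n)) (A : 'M[R]_n)
  (B : 'M[R]_(n, m)) : Prop :=
  normal_rank C A B (n + p).

(* A square system (p inputs, p outputs) is invertible: transfer matrix of
   normal rank p (= number of inputs = number of outputs). *)
Definition invertible_sys (n p : nat) (C : 'M[R]_(p, n)) (A : 'M[R]_n)
  (B : 'M[R]_(n, p)) : Prop :=
  normal_rank C A B (n + p).

Definition invariant_zero (n m p : nat) (C : 'M[R]_(p, n)) (A : 'M[R]_n)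
  (B : 'M[R]_(n, m)) (z : R[i]) : Prop :=
  exists w : R[i], (\rank (sysmx C A B z) < \rank (sysmx C A B w))%N.

Definition no_invariant_zeros (n m p : nat) (C : 'M[R]_(p, n)) (A : 'M[R]_n)
  (B : 'M[R]_(n, m)) : Prop :=
  forall z : R[i], ~ invariant_zero C A B z.

(* Square system of uniform rank nq: all infinite zeros of order nq,
   i.e. C A^k B = 0 for k < nq - 1 and C A^(nq-1) B nonsingular. *)
Definition uniform_rank (n p : nat) (C : 'M[R]_(p, n)) (A : 'M[R]_n)
  (B : 'M[R]_(n, p)) (nq : nat) : Prop :=
  (0 < nq)%N /\
  (forall k : nat, (k < nq.-1)%N -> C *m (A ^+ k) *m B = 0) /\
  (C *m (A ^+ nq.-1) *m B) \in unitmx.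

Definition reproduces_outputs (r nc p : nat) (Cr : 'M[R]_(p, r))
  (Ar : 'M[R]_r) (Cc : 'M[R]_(p, nc)) (Ac : 'M[R]_nc) : Prop :=
  forall xr0 : 'cV[R]_r, exists xc0 : 'cV[R]_nc,
    forall k : nat, Cr *m (Ar ^+ k) *m xr0 = Cc *m (Ac ^+ k) *m xc0.

Definition eigs_those_plus_zeros (r nc : nat) (Ar : 'M[R]_r) (Ac : 'M[R]_nc)
  : Prop :=
  (forall z : R[i], eigenvalue (mxC Ar) z -> eigenvalue (mxC Ac) z) /\
  (forall z : R[i], eigenvalue (mxC Ac) z -> eigenvalue (mxC Ar) z \/ z = 0).

(* The interconnection of agent (A,B,C,Cm) with the pre-compensator
   (Ah,Bh,Eh,Ch,Dh), input v, state (x, xi), output y: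
     x+  = A x + B Ch xi + B Dh v
     xi+ = Ah xi + Bh Cm x + Eh v
     y   = C x
   reads, in new coordinates (xbar, omega) = (Tx, Tw) (x, xi)
   (an invertible change of coordinates with inverse [Px Pw]):
     xbar+  = Ac xbar + Bc (v + Cs omega),  omega+ = As omega,
     y = Cc xbar. *)
Definition interconnection_reads (n m q h s nc p : nat)
  (A : 'M[R]_n) (B : 'M[R]_(n, m)) (C : 'M[R]_(p, n)) (Cm : 'M[R]_(q, n))
  (Ah : 'M[R]_h) (Bh : 'M[R]_(h, q)) (Eh : 'M[R]_(h, p))
  (Ch : 'M[R]_(m, h)) (Dh : 'M[R]_(m, p))
  (Ac : 'M[R]_nc) (Bc : 'M[R]_(nc, p)) (Cc : 'M[R]_(p, nc))
  (As : 'M[R]_s) (Cs : 'M[R]_(p, s)) : Prop :=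
  let Aint : 'M[R]_(n + h) := block_mx A (B *m Ch) (Bh *m Cm) Ah in
  let Bint : 'M[R]_(n + h, p) := col_mx (B *m Dh) Eh in
  let Cint : 'M[R]_(p, n + h) := row_mx C 0 in
  exists (Tx : 'M[R]_(nc, n + h)) (Tw : 'M[R]_(s, n + h))
         (Px : 'M[R]_(n + h, nc)) (Pw : 'M[R]_(n + h, s)),
    Px *m Tx + Pw *m Tw = 1%:M /\ Tx *m Px = 1%:M /\ Tx *m Pw = 0 /\
    Tw *m Px = 0 /\ Tw *m Pw = 1%:M /\
    Tx *m Aint = Ac *m Tx + Bc *m Cs *m Tw /\ Tx *m Bint = Bc /\
    Tw *m Aint = As *m Tw /\ Tw *m Bint = 0 /\
    Cint = Cc *m Tx.

End LinearSystems.

Section Graph.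
Variable R : realType.
Variable N : nat.

(* adjacency a : a i j > 0 means an edge from j to i *)
Definition edge_rel (a : 'M[R]_N) : rel 'I_N := fun j i => 0 < a i j.

(* Graph in G^N_C: every node is a member of a directed tree whose root
   lies in C, i.e. every node is reachable by a directed path from C. *)
Definition in_graph_set (a : 'M[R]_N) (Cset : {set 'I_N}) : Prop :=
  forall i : 'I_N, exists2 c, c \in Cset & connect (edge_rel a) c i.

Definition din (a : 'M[R]_N) (i : 'I_N) : R := \sum_(j < N) a i j.

Definition iota_C (Cset : {set 'I_N}) (i : 'I_N) : R :=
  if i \in Cset then 1 else 0.

Definition laplacian (a : 'M[R]_N) : 'M[R]_N :=
  \matrix_(i, j) (if i == j then din a i else - a i j).

Definition Lbar (a : 'M[R]_N) (Cset : {set 'I_N}) : 'M[R]_N :=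
  laplacian a + diag_mx (\row_i iota_C Cset i).

Definition Dbar (a : 'M[R]_N) (Cset : {set 'I_N}) : 'M[R]_N :=
  1%:M - invmx (2%:M + diag_mx (\row_i din a i)) *m Lbar a Cset.

Definition zeta_bar (p : nat) (a : 'M[R]_N) (Cset : {set 'I_N})
  (y : 'I_N -> 'cV[R]_p) (yr : 'cV[R]_p) (i : 'I_N) : 'cV[R]_p :=
  (2 + din a i)^-1 *:
    (\sum_(j < N) a i j *: (y i - y j) + iota_C Cset i *: (y i - yr)).

Definition zeta_check (nc : nat) (a : 'M[R]_N) (Cset : {set 'I_N})
  (eta : 'I_N -> 'cV[R]_nc) (i : 'I_N) : 'cV[R]_nc :=
  eta i - \sum_(j < N) Dbar a Cset i j *: eta j.

End Graph.

(* Main.v *)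
Require Import Defs.
From HB Require Import structures.
From mathcomp Require Import all_boot all_order all_algebra.
From mathcomp Require Import complex.
From mathcomp Require Import all_classical all_reals all_analysis.
From mathcomp Require Import ring lra.
Import numFieldNormedType.Exports.
Import Order.TTheory GRing.Theory Num.Theory.
Local Open Scope ring_scope.
Local Open Scope classical_set_scope.

Set Implicit Arguments.
Unset Strict Implicit.
Unset Printing Implicit Defensive.

Section Null.
Variable R : realType.
Local Notation C := R[i].

Definition nC (z : C) : R := Num.sqrt ((complex.Re z)^+2 + (complex.Im z)^+2).

Lemma normCE (z : C) : `|z| = (nC z)%:C%C.
Proof. exact: normc_def. Qed.

Lemma nC_ge0 z : 0 <= nC z.
Proof. exact: sqrtr_ge0. Qed.

Lemma nC_add z w : nC (z + w) <= nC z + nC w.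
Proof. by rewrite -lecR rmorphD /= -!normCE ler_normD. Qed.

Lemma nC_mul z w : nC (z * w) = nC z * nC w.
Proof. by apply: complexI; rewrite rmorphM /= -!normCE normrM. Qed.

Lemma nC_opp z : nC (- z) = nC z.
Proof. by apply: complexI; rewrite -!normCE normrN. Qed.

Lemma nC_real (x : R) : nC (x%:C)%C = `|x|.
Proof. by rewrite /nC /= expr0n /= addr0 sqrtr_sqr. Qed.

Lemma nC0 : nC 0 = 0.
Proof. by rewrite -[0 : C]/((0:R)%:C)%C nC_real normr0. Qed.

Lemma nC_lt1 z : `|z| < 1 -> nC z < 1.
Proof. by rewrite normCE -[1 : C]/((1:R)%:C)%C ltcR. Qed.

Lemma nC_le1 z : `|z| <= 1 -> nC z <= 1.
Proof. by rewrite normCE -[1 : C]/((1:R)%:C)%C lecR. Qed.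

Definition rnull (a : nat -> R) :=
  forall e, 0 < e -> exists K, forall k, (K <= k)%N -> `|a k| <= e.

Lemma rnull0 : rnull (fun _ => 0).
Proof. by move=> e e0; exists 0%N => k _; rewrite normr0 ltW. Qed.

Lemma rnull_le (a b : nat -> R) : (forall k, `|a k| <= `|b k|) -> rnull b -> rnull a.
Proof.
move=> hab hb e e0; have [K HK] := hb e e0; exists K => k /HK hk.
exact: (le_trans (hab k)).
Qed.

Lemma rnullD a b : rnull a -> rnull b -> rnull (fun k => a k + b k).
Proof.
move=> ha hb e e0; have e20 : 0 < e / 2 by rewrite divr_gt0.
have [K1 H1] := ha _ e20; have [K2 H2] := hb _ e20.
exists (maxn K1 K2) => k; rewrite geq_max => /andP[k1 k2].
rewrite (le_trans (ler_normD _ _)) //.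
by rewrite [e](splitr e) lerD // ?H1 ?H2.
Qed.

Lemma rnullM c a : rnull a -> rnull (fun k => c * a k).
Proof.
move=> ha e e0; have ce : 0 < e / (`|c| + 1) by rewrite divr_gt0 // ltr_wpDl.
have [K HK] := ha _ ce; exists K => k /HK hk.
rewrite normrM; have c1 : 0 < `|c| + 1 by rewrite ltr_wpDl.
rewrite (@le_trans _ _ ((`|c| + 1) * (e / (`|c| + 1)))) //.
  by rewrite ler_pM // lerDl.
by rewrite mulrC mulfVK // gt_eqF.
Qed.

Lemma rnull_sum (I : finType) (a : I -> nat -> R) :
  (forall i, rnull (a i)) -> rnull (fun k => \sum_i a i k).
Proof.
move=> ha; elim: (index_enum I) => [|j s IH].
  by apply: (rnull_le _ rnull0) => k; rewrite big_nil normr0.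
have := rnullD (ha j) IH; apply: rnull_le => k.
by rewrite big_cons.
Qed.

Lemma rnull_shift a : rnull (fun k => a k.+1) -> rnull a.
Proof. by move=> h e e0; have [K HK] := h e e0; exists K.+1 => -[|k] // /HK. Qed.

Lemma rnull_shiftn a m : rnull (fun k => a (k + m)%N) -> rnull a.
Proof.
move=> h e e0; have [K HK] := h e e0; exists (K + m)%N => k km.
have := HK (k - m)%N; rewrite subnK; last by rewrite (leq_trans (leq_addl _ _) km).
by apply; rewrite leq_subRL ?(leq_trans (leq_addl _ _) km) // addnC.
Qed.

Lemma rnull_contr (a b : nat -> R) q : 0 <= q < 1 ->
  (forall k, 0 <= a k) -> (forall k, a k.+1 <= q * a k + b k) -> rnull b -> rnull a.
Proof.
move=> /andP[q0 q1] a0 hrec hb e e0.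
have e20 : 0 < e / 2 by rewrite divr_gt0.
have c0 : 0 < (1 - q) * (e / 2) by rewrite mulr_gt0 // subr_gt0.
have [K1 H1] := hb _ c0.
have bound j : a (K1 + j)%N <= q ^+ j * a K1 + e / 2.
  elim: j => [|j IH]; first by rewrite addn0 expr0 mul1r lerDl ltW.
  rewrite addnS (le_trans (hrec _)) //.
  have hbk : b (K1 + j)%N <= (1 - q) * (e / 2).
    by rewrite (le_trans (ler_norm _)) // H1 // leq_addr.
  rewrite (le_trans (lerD (ler_wpM2l q0 IH) hbk)) //.
  rewrite exprS mulrDr mulrA -addrA lerD2l mulrBl mul1r.
  by rewrite addrC subrK.
have : (fun j => q ^+ j) @ \oo --> (0 : R) by apply: cvg_expr; rewrite ger0_norm.
move/cvgr0Pnorm_le => /(_ (e / 2 / (a K1 + 1))).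
have aK : 0 < a K1 + 1 by rewrite ltr_wpDl.
move=> /(_ (divr_gt0 e20 aK)) [J _ HJ].
exists (K1 + J)%N => k kK.
have -> : k = (K1 + (k - K1))%N by rewrite subnKC // (leq_trans (leq_addr _ _) kK).
rewrite ger0_norm // (le_trans (bound _)) // [e in _ <= e](splitr e) lerD //.
have hq : q ^+ (k - K1) <= e / 2 / (a K1 + 1).
  have := HJ (k - K1)%N; rewrite /= ger0_norm ?exprn_ge0 //; apply.
  by rewrite /= leq_subRL ?(leq_trans (leq_addr _ _) kK).
rewrite (le_trans (ler_wpM2r (a0 _) hq)) //.
rewrite mulrAC ler_pdivrMr // ler_wpM2l ?ltW //.
by rewrite ltrDl.
Qed.


Definition cnull (z : nat -> C) := rnull (fun k => nC (z k)).
Definition mnull m n (Z : nat -> 'M[C]_(m, n)) := forall i j, cnull (fun k => Z k i j).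

Lemma cnull_le (z w : nat -> C) : (forall k, nC (z k) <= nC (w k)) -> cnull w -> cnull z.
Proof. by move=> h; apply: rnull_le => k; rewrite !ger0_norm ?nC_ge0. Qed.

Lemma cnull0 : cnull (fun _ => 0).
Proof. by apply: (rnull_le _ rnull0) => k; rewrite nC0. Qed.

Lemma cnullD z w : cnull z -> cnull w -> cnull (fun k => z k + w k).
Proof.
move=> hz hw; have := rnullD hz hw; apply: rnull_le => k.
by rewrite !ger0_norm ?addr_ge0 ?nC_ge0 ?nC_add.
Qed.

Lemma cnullM c z : cnull z -> cnull (fun k => c * z k).
Proof.
move=> hz; have := rnullM (nC c) hz; apply: rnull_le => k.
by rewrite nC_mul.
Qed.

Lemma cnullN z : cnull z -> cnull (fun k => - z k).
Proof. by move=> hz; apply: (cnull_le _ hz) => k; rewrite nC_opp. Qed.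

Lemma cnull_sum (I : finType) (z : I -> nat -> C) :
  (forall i, cnull (z i)) -> cnull (fun k => \sum_i z i k).
Proof.
move=> ha; elim: (index_enum I) => [|j s IH].
  by apply: (cnull_le _ cnull0) => k; rewrite big_nil.
have := cnullD (ha j) IH; apply: cnull_le => k.
by rewrite big_cons.
Qed.

Lemma cnull_shift z : cnull (fun k => z k.+1) -> cnull z.
Proof. exact: rnull_shift. Qed.

Lemma cnull_contr (z w : nat -> C) t : nC t < 1 ->
  (forall k, z k.+1 = t * z k + w k) -> cnull w -> cnull z.
Proof.
move=> t1 hrec hw; apply: (@rnull_contr _ _ (nC t)) hw.
- by rewrite nC_ge0 t1.
- by move=> k; exact: nC_ge0.
- by move=> k; rewrite hrec (le_trans (nC_add _ _)) // nC_mul.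
Qed.

Section MNull.
Variables m n : nat.
Implicit Types Z W : nat -> 'M[C]_(m, n).

Lemma mnull0 : mnull (fun _ => 0 : 'M[C]_(m, n)).
Proof. by move=> i j; apply: (cnull_le _ cnull0) => k; rewrite mxE. Qed.

Lemma mnullD Z W : mnull Z -> mnull W -> mnull (fun k => Z k + W k).
Proof.
move=> hZ hW i j; have := cnullD (hZ i j) (hW i j); apply: cnull_le => k.
by rewrite mxE.
Qed.

Lemma mnullN Z : mnull Z -> mnull (fun k => - Z k).
Proof.
move=> hZ i j; have := cnullN (hZ i j); apply: cnull_le => k.
by rewrite mxE.
Qed.

Lemma mnullB Z W : mnull Z -> mnull W -> mnull (fun k => Z k - W k).
Proof. by move=> hZ hW; apply: mnullD => //; apply: mnullN. Qed.

Lemma mnullZ c Z : mnull Z -> mnull (fun k => c *: Z k).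
Proof.
move=> hZ i j; have := cnullM c (hZ i j); apply: cnull_le => k.
by rewrite mxE.
Qed.

Lemma mnull_mull p (A : 'M[C]_(p, m)) Z : mnull Z -> mnull (fun k => A *m Z k).
Proof.
move=> hZ i j; have := @cnull_sum 'I_m (fun l k => A i l * Z k l j).
move=> /(_ (fun l => cnullM _ (hZ l j))); apply: cnull_le => k.
by rewrite mxE.
Qed.

Lemma mnull_mulr p (A : 'M[C]_(n, p)) Z : mnull Z -> mnull (fun k => Z k *m A).
Proof.
move=> hZ i j; have := @cnull_sum 'I_n (fun l k => A l j * Z k i l).
move=> /(_ (fun l => cnullM _ (hZ i l))); apply: cnull_le => k.
by rewrite mxE; under eq_bigr do rewrite mulrC.
Qed.

Lemma mnull_shift Z : mnull (fun k => Z k.+1) -> mnull Z.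
Proof. by move=> h i j; apply: cnull_shift; exact: h. Qed.

Lemma mnull_sum (I : finType) (Z : I -> nat -> 'M[C]_(m, n)) :
  (forall l, mnull (Z l)) -> mnull (fun k => \sum_l Z l k).
Proof.
move=> h i j; have := @cnull_sum I (fun l k => Z l k i j) (fun l => h l i j).
by apply: cnull_le => k; rewrite summxE.
Qed.

End MNull.


Lemma cnull_ext (z w : nat -> C) : (forall k, z k = w k) -> cnull w -> cnull z.
Proof. by move=> h; apply: cnull_le => k; rewrite h. Qed.

Lemma mnull_ext m n (Z W : nat -> 'M[C]_(m, n)) : (forall k, Z k = W k) -> mnull W -> mnull Z.
Proof. by move=> h hW i j; apply: (cnull_ext _ (hW i j)) => k; rewrite h. Qed.

Lemma trig_null n (T : 'M[C]_n) (z w : nat -> 'cV[C]_n) :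
  is_trig_mx T -> (forall i, nC (T i i) < 1) ->
  (forall k, z k.+1 = T *m z k + w k) -> mnull w -> mnull z.
Proof.
move=> /is_trig_mxP Tt Td hrec hw.
suff H : forall m (i : 'I_n), (i < m)%N -> cnull (fun k => z k i 0).
  by move=> i j; rewrite (ord1 j); apply: (H n.+1); rewrite ltnS ltnW.
elim=> [//|m IH] i im.
pose u k := \sum_l (if l != i then T i l * z k l 0 else 0) + w k i 0.
apply: (@cnull_contr _ u (T i i) (Td i)).
  move=> k; rewrite hrec !mxE (bigD1 i) //= addrA; congr (_ + _ + _).
  by rewrite big_mkcond.
apply: cnullD; last exact: hw.
apply: cnull_sum => l; have [li|] := ltnP l i.
  have -> : (l != i) by rewrite neq_ltn li.
  by apply: cnullM; apply: IH; rewrite (leq_trans li).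
rewrite leq_eqVlt => /orP[/eqP/val_inj ->|il]; first by rewrite eqxx; exact: cnull0.
by apply: (cnull_ext _ cnull0) => k; rewrite Tt // mul0r if_same.
Qed.


Lemma eig_det (F : fieldType) n (A : 'M[F]_n) a :
  eigenvalue A a = (\det (a%:M - A) == 0).
Proof.
apply/eigenvalueP/det0P=> [[v Av_av v_nz] | [v v_nz Av_av]]; exists v => //.
  by rewrite mulmxBr Av_av mul_mx_scalar subrr.
by apply/eqP; rewrite -mul_mx_scalar eq_sym -subr_eq0 -mulmxBr Av_av.
Qed.

Lemma eig_tr (F : fieldType) n (A : 'M[F]_n) a :
  eigenvalue A^T a = eigenvalue A a.
Proof. by rewrite !eig_det -det_tr linearB /= tr_scalar_mx trmxK. Qed.

Lemma trig_diag_eig (F : fieldType) n (T : 'M[F]_n) i :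
  is_trig_mx T -> eigenvalue T (T i i).
Proof.
move=> /is_trig_mxP Tt; rewrite eig_det det_trig.
  by rewrite (bigD1 i) //= !mxE eqxx mulr1n subrr mul0r.
apply/is_trig_mxP => j l jl; rewrite !mxE -val_eqE /= (ltn_eqF jl) mulr0n.
by rewrite Tt // subr0.
Qed.

Lemma eig_conj (F : fieldType) n (P M : 'M[F]_n) a : P \in unitmx ->
  eigenvalue (conjmx P M) a -> eigenvalue M a.
Proof.
move=> Pu; rewrite conjumx // => /eigenvalueP [v hv vn0].
apply/eigenvalueP; exists (v *m P).
  have -> : v *m P *m M = v *m (P *m M *m invmx P) *m P by rewrite !mulmxA mulmxKV.
  by rewrite hv scalemxAl.
by apply: contra vn0 => /eqP /(congr1 (mulmx^~ (invmx P))); rewrite mulmxK // mul0mx => ->.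
Qed.

Lemma schur_null n (M : 'M[C]_n) (z w : nat -> 'cV[C]_n) :
  (forall a, eigenvalue M a -> nC a < 1) ->
  (forall k, z k.+1 = M *m z k + w k) -> mnull w -> mnull z.
Proof.
move=> hM hrec hw; case: n => [|n] in M z w hM hrec hw *; first by case.
have [P /unitarymx_unit Pu Ptrig] := @Schur _ _ M (ltn0Sn n).
pose T := conjmx P M.
have hT : is_trig_mx T by exact: Ptrig.
have TP : T *m P = P *m M by rewrite /T conjumx // mulmxKV.
have h' : mnull (fun k => P *m z k).
  apply: (@trig_null _ T _ (fun k => P *m w k) hT).
  - by move=> i; apply: hM; apply: (eig_conj Pu); exact: trig_diag_eig.
  - by move=> k; rewrite hrec mulmxDr mulmxA -TP mulmxA.
  - exact: mnull_mull.
apply: (mnull_ext _ (mnull_mull (invmx P) h')) => k.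
by rewrite mulmxA mulVmx // mul1mx.
Qed.


Lemma kron_null n N (A : 'M[C]_n) (D : 'M[C]_N) (Z W : nat -> 'M[C]_(n, N)) :
  (forall a, eigenvalue A a -> nC a <= 1) ->
  (forall a, eigenvalue D a -> nC a < 1) ->
  (forall k, Z k.+1 = A *m Z k *m D^T + W k) -> mnull W -> mnull Z.
Proof.
move=> hA hD hrec hW.
case: n => [|n] in A Z W hA hrec hW *; first by case.
case: N => [|N] in D Z W hD hrec hW *; first by move=> ? [].
have [Q /unitarymx_unit Qu Qtrig] := @Schur _ _ A (ltn0Sn n).
have [P /unitarymx_unit Pu Ptrig] := @Schur _ _ D (ltn0Sn N).
pose S := conjmx Q A; pose T := conjmx P D.
have hS : is_trig_mx S by exact: Qtrig.
have hT : is_trig_mx T by exact: Ptrig.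
have SQ : S *m Q = Q *m A by rewrite /S conjumx // mulmxKV.
have TP : T *m P = P *m D by rewrite /T conjumx // mulmxKV.
pose Y k := Q *m Z k *m P^T.
pose W' k := Q *m W k *m P^T.
have hW' : mnull W' by apply: mnull_mulr; apply: mnull_mull.
have hY k : Y k.+1 = S *m Y k *m T^T + W' k.
  rewrite /Y /W' hrec mulmxDr mulmxDl; congr (_ + _).
  rewrite !mulmxA SQ -!mulmxA; congr (_ *m (_ *m _)).
  by rewrite -!trmx_mul TP.
have Sd c : nC (S c c) <= 1 by apply: hA; apply: (eig_conj Qu); exact: trig_diag_eig.
have Td a : nC (T a a) < 1 by apply: hD; apply: (eig_conj Pu); exact: trig_diag_eig.
have Yd k : Y k = Q *m Z k *m P^T by [].
clearbody S T Y W'.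
have colY : forall a : 'I_N.+1, mnull (fun k => col a (Y k)).
  move=> a; have [m] := ubnP a; elim: m a => [//|m IH] a am.
  pose u k := \sum_b (if b != a then T a b *: (S *m col b (Y k)) else 0)
              + col a (W' k).
  apply: (trig_null (T := T a a *: S) (w := u)).
  - by apply/is_trig_mxP => i j ij; rewrite mxE (is_trig_mxP hS) // mulr0.
  - move=> c; rewrite mxE nC_mul (le_lt_trans _ (Td a)) //.
    by rewrite ler_piMr ?nC_ge0.
  - move=> k; rewrite /u.
    have e1 b : S *m col b (Y k) = col b (S *m Y k) by rewrite !colE mulmxA.
    under eq_bigr do rewrite e1.
    rewrite -scalemxAl e1 hY.
    apply/colP => c; rewrite !mxE summxE (bigD1 a) //= [in RHS](bigD1 a) //=.
    rewrite eqxx (_ : (0 : 'cV[C]_(n.+1)) c 0 = 0) ?mxE // add0r -!addrA; congr (_ + _).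
      by rewrite mulrC.
    congr (_ + _); apply: eq_bigr => b ba; rewrite ba !mxE mulrC.
    by congr (_ * _); apply: eq_bigr => l _; rewrite !mxE.
  - apply: mnullD; last by move=> i j; have := hW' i a; apply: cnull_ext => k; rewrite !mxE.
    apply: mnull_sum => b; have [ba|] := ltnP b a.
      rewrite (_ : b != a) ?neq_ltn ?ba //.
      by apply: mnullZ; apply: mnull_mull; apply: IH; rewrite (leq_trans ba).
    rewrite leq_eqVlt => /orP[/eqP/val_inj ->|ab]; first by rewrite eqxx; exact: mnull0.
    apply: (mnull_ext _ (@mnull0 _ _)) => k.
    by rewrite (is_trig_mxP hT) // scale0r if_same.
have hYn : mnull Y.
  move=> i j; have := colY j i 0; apply: cnull_ext => k; rewrite !mxE.
  done.
apply: (mnull_ext _ (mnull_mulr (invmx P^T) (mnull_mull (invmx Q) hYn))) => k.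
by rewrite Yd !mulmxA mulVmx // mul1mx mulmxK // unitmx_tr.
Qed.


Lemma nC_sum (I : finType) (f : I -> C) : nC (\sum_i f i) <= \sum_i nC (f i).
Proof.
elim/big_ind2: _ => //; first by rewrite nC0.
by move=> x1 x2 y1 y2 h1 h2; rewrite (le_trans (nC_add _ _)) // lerD.
Qed.

Lemma nC_eq0 z : nC z = 0 -> z = 0.
Proof. by move=> h; apply/eqP; rewrite -normr_eq0 normCE h. Qed.

End Null.


Section MxC.
Variable R : realType.
Local Notation C := R[i].

Lemma mxCE m n (A : 'M[R]_(m, n)) : mxC A = map_mx (real_complex R) A.
Proof. by []. Qed.

Lemma mxCD m n (A B : 'M[R]_(m, n)) : mxC (A + B) = mxC A + mxC B.
Proof. by rewrite !mxCE map_mxD. Qed.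
Lemma mxCN m n (A : 'M[R]_(m, n)) : mxC (- A) = - mxC A.
Proof. by rewrite !mxCE map_mxN. Qed.
Lemma mxCB m n (A B : 'M[R]_(m, n)) : mxC (A - B) = mxC A - mxC B.
Proof. by rewrite !mxCE map_mxB. Qed.
Lemma mxCM m n p (A : 'M[R]_(m, n)) (B : 'M[R]_(n, p)) : mxC (A *m B) = mxC A *m mxC B.
Proof. by rewrite !mxCE map_mxM. Qed.
Lemma mxCZ m n c (A : 'M[R]_(m, n)) : mxC (c *: A) = (c%:C)%C *: mxC A.
Proof. by rewrite !mxCE map_mxZ. Qed.
Lemma mxC_sum m n (I : finType) (F : I -> 'M[R]_(m, n)) :
  mxC (\sum_i F i) = \sum_i mxC (F i).
Proof. by rewrite !mxCE map_mx_sum. Qed.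
Lemma mxC_tr m n (A : 'M[R]_(m, n)) : mxC A^T = (mxC A)^T.
Proof. by rewrite !mxCE map_trmx. Qed.
Lemma mxC_entry m n (A : 'M[R]_(m, n)) i j : mxC A i j = ((A i j)%:C)%C.
Proof. by rewrite mxE. Qed.

End MxC.

Section GraphFacts.
Variables (R : realType) (N : nat) (a : 'M[R]_N) (Cset : {set 'I_N}).
Hypothesis a0 : forall i j, 0 <= a i j.
Hypothesis aii : forall i, a i i = 0.

Lemma din_ge0 i : 0 <= din a i.
Proof. by apply: sumr_ge0 => j _; exact: a0. Qed.

Lemma dd_gt0 i : 0 < 2 + din a i.
Proof. by rewrite ltr_wpDr ?din_ge0. Qed.

Lemma iota01 i : 0 <= iota_C R Cset i <= 1.
Proof. by rewrite /iota_C; case: ifP; rewrite ?lexx ?ler01. Qed.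

Lemma invX : invmx (2%:M + diag_mx (\row_i din a i)) = diag_mx (\row_i (2 + din a i)^-1).
Proof.
set X := _ + _; set Y := diag_mx _.
have YX : Y *m X = 1%:M.
  apply/matrixP => i j; rewrite /X /Y mul_diag_mx !mxE.
  case: (eqVneq i j) => [->|ij]; last first.
    by rewrite !mulr0n addr0 mulr0.
  by rewrite !mulr1n mulVf // gt_eqF // dd_gt0.
have [_ Xu] := mulmx1_unit YX.
by rewrite -[LHS]mul1mx -YX -mulmxA mulmxV // mulmx1.
Qed.

Lemma Lbar_entry i j :
  Lbar a Cset i j = (i == j)%:R * (din a i + iota_C R Cset i) - a i j.
Proof.
rewrite /Lbar /laplacian !mxE; case: (eqVneq i j) => [->|ij].
  by rewrite aii subr0 mul1r mulr1n.
by rewrite mul0r sub0r mulr0n addr0.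
Qed.

Lemma M_entry i j :
  (1%:M - Dbar a Cset) i j = (2 + din a i)^-1 * Lbar a Cset i j.
Proof.
rewrite /Dbar opprB addrC subrK invX mul_diag_mx !mxE.
done.
Qed.

Lemma Dbar_entry i j :
  Dbar a Cset i j = (i == j)%:R - (2 + din a i)^-1 * Lbar a Cset i j.
Proof.
by rewrite -M_entry !mxE subKr.
Qed.

Lemma Dbar_ge0 i j : 0 <= Dbar a Cset i j.
Proof.
rewrite Dbar_entry Lbar_entry; case: (eqVneq i j) => [->|ij].
  rewrite aii subr0 mul1r subr_ge0 ler_pdivrMl ?dd_gt0 // mulr1.
  rewrite [2 + _]addrC lerD2l; have /andP[_ h] := iota01 j.
  by rewrite (le_trans h) // ler1n.
rewrite (_ : false%:R = 0 :> R) // mul0r !sub0r mulrN opprK.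
by rewrite mulr_ge0 ?invr_ge0 ?a0 // ltW // dd_gt0.
Qed.

Lemma Dbar_pos i j : 0 < a i j -> 0 < Dbar a Cset i j.
Proof.
move=> aij; have ij : i != j by apply: contraTneq aij => ->; rewrite aii ltxx.
rewrite Dbar_entry Lbar_entry (negPf ij) (_ : false%:R = 0 :> R) // mul0r !sub0r mulrN opprK.
by rewrite mulr_gt0 ?invr_gt0 ?dd_gt0.
Qed.

Lemma Dbar_rowsum i :
  \sum_j Dbar a Cset i j = 1 - iota_C R Cset i / (2 + din a i).
Proof.
under eq_bigr do rewrite Dbar_entry Lbar_entry.
have hdelta (c : R) : \sum_j (i == j)%:R * c = c.
  rewrite (bigD1 i) //= eqxx mul1r big1 ?addr0 // => j /negPf.
  by rewrite eq_sym => ->; rewrite mul0r.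
rewrite sumrB -mulr_sumr sumrB hdelta.
rewrite (_ : \sum_j (i == j)%:R = 1 :> R); last first.
  by rewrite -[RHS](hdelta 1); apply: eq_bigr => j _; rewrite mulr1.
by rewrite -/(din a i) [din a i + _]addrC addrK mulrC.
Qed.

Lemma connect_closed (T : finType) (e : rel T) (P : pred T) x y :
  (forall u v, e u v -> P u -> P v) -> connect e x y -> P x -> P y.
Proof.
move=> h /connectP [p pth ->]; elim: p x pth => //= w p IH x /andP [exw pw] Px.
exact: IH pw (h _ _ exw Px).
Qed.

Lemma Dbar_eig : in_graph_set a Cset ->
  forall z, eigenvalue (mxC (Dbar a Cset)) z -> nC z < 1.
Proof.
move=> hg z; rewrite -eig_tr -mxC_tr => /eigenvalueP [v hv vn0].
set D := Dbar a Cset in hv *.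
have hrow j : \sum_l v 0 l * ((D j l)%:C)%C = z * v 0 j.
  have := congr1 (fun M : 'rV[R[i]]_N => M 0 j) hv; rewrite !mxE => <-.
  by apply: eq_bigr => l _; rewrite !mxE.
have [j0 vj0] : exists j0, v 0 j0 != 0.
  apply/existsP; apply: contraR vn0; rewrite negb_exists => /forallP h.
  by apply/eqP/rowP => j; rewrite !mxE; apply/eqP; have := h j; rewrite negbK.
pose i0 := [arg max_(i > j0) nC (v 0 i)]%O.
pose m := nC (v 0 i0).
have hmax l : nC (v 0 l) <= m.
  by rewrite /m /i0; case: arg_maxP => // i _; apply.
have m0 : 0 < m.
  apply: (lt_le_trans _ (hmax j0)); rewrite lt_neqAle nC_ge0 andbT eq_sym.
  by apply: contra vj0 => /eqP /nC_eq0 ->.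
rewrite ltNge; apply/negP => z1.
pose S i := nC (v 0 i) == m.
have key i : S i -> iota_C R Cset i = 0 /\ forall l, 0 < a i l -> S l.
  move=> /eqP Si.
  have h1 : m <= \sum_l D i l * nC (v 0 l).
    rewrite -{1}Si (le_trans (ler_peMl (nC_ge0 _) z1)) // -nC_mul -hrow.
    rewrite (le_trans (nC_sum _)) // le_eqVlt; apply/orP; left; apply/eqP.
    apply: eq_bigr => l _; rewrite nC_mul nC_real ger0_norm ?Dbar_ge0 //.
    by rewrite mulrC.
  set s := \sum_l D i l * (m - nC (v 0 l)).
  have h2 : \sum_l D i l * nC (v 0 l) = m * (1 - iota_C R Cset i / (2 + din a i)) - s.
    rewrite -Dbar_rowsum mulr_sumr /s -sumrB; apply: eq_bigr => l _.
    ring.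
  have s0 : 0 <= s by apply: sumr_ge0 => l _; rewrite mulr_ge0 ?Dbar_ge0 ?subr_ge0.
  have x0 : 0 <= iota_C R Cset i / (2 + din a i).
    have /andP[hi _] := iota01 i; by rewrite divr_ge0 // ltW // dd_gt0.
  have hm : m * (iota_C R Cset i / (2 + din a i)) + s <= 0 by rewrite h2 in h1; lra.
  have mx0 : 0 <= m * (iota_C R Cset i / (2 + din a i)) by rewrite mulr_ge0 // ltW.
  have hm1 : m * (iota_C R Cset i / (2 + din a i)) = 0 by lra.
  have hs : s = 0 by lra.
  split.
    move/eqP: hm1; rewrite mulf_eq0 (gt_eqF m0) /= mulf_eq0 invr_eq0.
    by rewrite (gt_eqF (dd_gt0 i)) orbF => /eqP.
  move=> l ail; move/eqP: hs; rewrite psumr_eq0; last first.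
    by move=> k _; rewrite mulr_ge0 ?Dbar_ge0 ?subr_ge0.
  move=> /allP /(_ l (mem_index_enum _)) /implyP /(_ isT).
  by rewrite mulf_eq0 (gt_eqF (Dbar_pos ail)) /= subr_eq0 eq_sym.
have [c cC ci0] := hg i0.
have : ~~ S i0.
  apply: (connect_closed (P := fun u => ~~ S u) _ ci0).
    move=> u w euw; apply: contra => Sw.
    by have [_ ->] := key w Sw.
  apply/negP => /key [] /eqP; rewrite /iota_C cC oner_eq0 //.
by rewrite /S eqxx.
Qed.

End GraphFacts.

Section Final.
Variable R : realType.

Lemma mnull_cvg p q (v : nat -> 'M[R]_(p, q)) :
  mnull (fun k => mxC (v k)) -> v @ \oo --> (0 : 'M[R]_(p, q)).
Proof.
move=> hv; apply/cvgr0Pnorm_le => e e0.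
have : forall ij : 'I_p * 'I_q, exists K, forall k, (K <= k)%N ->
    `|nC (mxC (v k) ij.1 ij.2)| <= e.
  by move=> [i j]; exact: hv i j e e0.
move=> /fin_all_exists [K HK].
exists (\max_ij K ij)%N => // k /= hk.
rewrite [`|_|]mx_normrE; apply/bigmax_leP; split; first exact: ltW.
move=> ij _; have := HK ij k.
rewrite mxE nC_real normr_id; apply.
by rewrite (leq_trans _ hk) // (leq_bigmax ij).
Qed.

End Final.

Section RN.
Variable R : realType.
Definition RN m n (v : nat -> 'M[R]_(m, n)) := mnull (fun k => mxC (v k)).

Lemma RN_ext m n (v u : nat -> 'M[R]_(m, n)) : (forall k, v k = u k) -> RN u -> RN v.
Proof. by move=> h; apply: mnull_ext => k; rewrite h. Qed.
Lemma RN0 m n : RN (fun _ => 0 : 'M[R]_(m, n)).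
Proof. by apply: (mnull_ext _ (@mnull0 _ m n)) => k; rewrite !mxCE map_mx0. Qed.
Lemma RND m n (v u : nat -> 'M[R]_(m, n)) : RN v -> RN u -> RN (fun k => v k + u k).
Proof. by move=> hv hu; apply: (mnull_ext _ (mnullD hv hu)) => k; rewrite mxCD. Qed.
Lemma RNN m n (v : nat -> 'M[R]_(m, n)) : RN v -> RN (fun k => - v k).
Proof. by move=> hv; apply: (mnull_ext _ (mnullN hv)) => k; rewrite mxCN. Qed.
Lemma RNB m n (v u : nat -> 'M[R]_(m, n)) : RN v -> RN u -> RN (fun k => v k - u k).
Proof. by move=> hv hu; apply: RND => //; apply: RNN. Qed.
Lemma RNM m n p (A : 'M[R]_(p, m)) (v : nat -> 'M[R]_(m, n)) : RN v -> RN (fun k => A *m v k).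
Proof. by move=> hv; apply: (mnull_ext _ (mnull_mull (mxC A) hv)) => k; rewrite mxCM. Qed.
Lemma RNZ m n c (v : nat -> 'M[R]_(m, n)) : RN v -> RN (fun k => c *: v k).
Proof. by move=> hv; apply: (mnull_ext _ (mnullZ (c%:C)%C hv)) => k; rewrite mxCZ. Qed.
Lemma RN_sum m n (I : finType) (v : I -> nat -> 'M[R]_(m, n)) :
  (forall l, RN (v l)) -> RN (fun k => \sum_l v l k).
Proof. by move=> hv; apply: (mnull_ext _ (mnull_sum hv)) => k; rewrite mxC_sum. Qed.

Lemma RN_schur n (M : 'M[R]_n) (z w : nat -> 'cV[R]_n) :
  (forall a, eigenvalue (mxC M) a -> nC a < 1) ->
  (forall k, z k.+1 = M *m z k + w k) -> RN w -> RN z.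
Proof.
move=> hM hrec hw; apply: (schur_null hM _ hw) => k.
by rewrite hrec mxCD mxCM.
Qed.

End RN.

Lemma mx_id_e (R : realType) (m n : nat) (a1 a2 a3 a4 a5 a6 : 'M[R]_(m, n)) :
  a1 + (a2 - a3) - a4 - (a5 - a4 + a6) = (a1 - a3) - (a5 - a2) + - a6.
Proof. by apply/matrixP => r c; rewrite !mxE; ring. Qed.

Lemma mx_id_dl (R : realType) (m n : nat) (b1 b2 b3 b4 b5 b6 b7 : 'M[R]_(m, n)) :
  b1 - b2 + b3 - ((b4 - b2) + b5 - b6) = (b1 - b4 - (b7 - b6)) + (b3 - (b5 - b7)).
Proof. by apply/matrixP => r c; rewrite !mxE; ring. Qed.

Lemma mx_id_xt (R : realType) (m n : nat) (c1 c2 c3 c4 : 'M[R]_(m, n)) :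
  c1 - c2 + c3 = (c1 - c4) + (c4 - c2 + c3).
Proof. by apply/matrixP => r c; rewrite !mxE; ring. Qed.

Lemma mx_id_zb (R : realType) (m n : nat) (s1 s2 g : 'M[R]_(m, n)) (d i : R) :
  s1 - s2 + i *: g = (d + i) *: g - s2 -> s1 = d *: g -> True.
Proof. by []. Qed.

Unset Implicit Arguments.
Set Strict Implicit.
Set Printing Implicit Defensive.

Theorem theorem4
  (R : realType) (N : nat)
  (* agent dimensions: state n i, input m i, measurement q i,
     pre-compensator state h i, disturbance-generator state s i *)
  (n m q h s : 'I_N -> nat)
  (* output dimension p, exosystem dimension r, dimension nc of the
     check-triple, its uniform rank nq *)
  (p r nc nq : nat)
  (* agents *)
  (A : forall i, 'M[R]_(n i)) (B : forall i, 'M[R]_(n i, m i))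
  (C : forall i, 'M[R]_(p, n i)) (Cm : forall i, 'M[R]_(q i, n i))
  (* exosystem *)
  (Ar : 'M[R]_r) (Cr : 'M[R]_(p, r))
  (* check triple (Cc, Ac, Bc) *)
  (Ac : 'M[R]_nc) (Bc : 'M[R]_(nc, p)) (Cc : 'M[R]_(p, nc))
  (* pre-compensators *)
  (Ah : forall i, 'M[R]_(h i)) (Bh : forall i, 'M[R]_(h i, q i))
  (Eh : forall i, 'M[R]_(h i, p)) (Ch : forall i, 'M[R]_(m i, h i))
  (Dh : forall i, 'M[R]_(m i, p))
  (* disturbance generators *)
  (As : forall i, 'M[R]_(s i)) (Cs : forall i, 'M[R]_(p, s i))
  (* gains *)
  (K : 'M[R]_(p, nc)) (H : 'M[R]_(nc, p)) :
  (* assumptions on the agents *)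
  (forall i, stabilizable (A i) (B i)) ->
  (forall i, detectable (C i) (A i)) ->
  (forall i, right_invertible (C i) (A i) (B i)) ->
  (forall i, detectable (Cm i) (A i)) ->
  (* assumptions on the exosystem *)
  observable Cr Ar ->
  eigs_in_closed_disc Ar ->
  (* assumptions on the check triple *)
  reproduces_outputs Cr Ar Cc Ac ->
  eigs_those_plus_zeros Ar Ac ->
  invertible_sys Cc Ac Bc ->
  uniform_rank Cc Ac Bc nq ->
  no_invariant_zeros Cc Ac Bc ->
  (* pre-compensators *)
  (forall i, interconnection_reads (A i) (B i) (C i) (Cm i)
               (Ah i) (Bh i) (Eh i) (Ch i) (Dh i) Ac Bc Cc (As i) (Cs i)) ->
  (forall i, schur_stable (As i)) ->
  (* gains *)
  schur_stable (Ac - Bc *m K) ->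
  schur_stable (Ac - H *m Cc) ->
  (* any nonempty root set, any graph in G^N_C *)
  forall (Cset : {set 'I_N}) (a : 'M[R]_N),
  Cset != finset.set0 ->
  (forall i j, 0 <= a i j) ->
  (forall i, a i i = 0) ->
  in_graph_set a Cset ->
  (* any closed-loop trajectory (= any initial conditions) *)
  forall (x : forall i, nat -> 'cV[R]_(n i))
         (xi : forall i, nat -> 'cV[R]_(h i))
         (xh eta : 'I_N -> nat -> 'cV[R]_nc)
         (xr : nat -> 'cV[R]_r),
  let y := fun i k => C i *m x i k in
  let yr := fun k => Cr *m xr k in
  (forall k, xr k.+1 = Ar *m xr k) ->
  (forall i k, x i k.+1 =
      A i *m x i k + B i *m (Ch i *m xi i k - Dh i *m K *m eta i k)) ->
  (forall i k, xi i k.+1 =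
      Ah i *m xi i k + Bh i *m (Cm i *m x i k) - Eh i *m K *m eta i k) ->
  (forall i k, xh i k.+1 =
      Ac *m xh i k
      + H *m (zeta_bar a Cset (fun j => y j k) (yr k) i - Cc *m xh i k)
      - Bc *m K *m zeta_check a Cset (fun j => eta j k) i) ->
  (forall i k, eta i k.+1 =
      (Ac - Bc *m K) *m eta i k + Ac *m xh i k
      - Ac *m zeta_check a Cset (fun j => eta j k) i) ->
  forall i, (fun k => y i k - yr k) @ \oo --> (0 : 'cV[R]_p).
Proof.
move=> hstab hdet hri hdetm hobs hclosed hrep heigs hinv hur hnz hint hAs hK hH.
move=> Cset a Cne a0 aii hg x xi xh eta xr y yr hxr hx hxi hxh heta i0.
have eAs j z : eigenvalue (mxC (As j)) z -> nC z < 1 by move=> hz; apply: nC_lt1; exact: (hAs j z hz).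
have eK z : eigenvalue (mxC (Ac - Bc *m K)) z -> nC z < 1 by move=> hz; apply: nC_lt1; exact: (hK z hz).
have eH z : eigenvalue (mxC (Ac - H *m Cc)) z -> nC z < 1 by move=> hz; apply: nC_lt1; exact: (hH z hz).
have eAc z : eigenvalue (mxC Ac) z -> nC z <= 1.
  move=> hz; case: (heigs.2 z hz) => [h'|->]; last by rewrite nC0 ler01.
  by apply: nC_le1; exact: (hclosed z h').
have eD := Dbar_eig a0 aii hg.
have [xc0 hxc0] := hrep (xr 0%N).
have xrE k : xr k = Ar ^+ k *m xr 0%N.
  elim: k => [|k IH]; first by rewrite expr0 mul1mx.
  by rewrite hxr IH mulmxA exprS mulmxE.
pose xc k := Ac ^+ k *m xc0.
have xc_rec k : xc k.+1 = Ac *m xc k by rewrite /xc exprS mulmxA mulmxE.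
have yrE k : yr k = Cc *m xc k by rewrite /yr xrE mulmxA hxc0 /xc mulmxA.
clearbody xc.
have : forall j, exists TT : 'M[R]_(nc, n j + h j) * 'M[R]_(s j, n j + h j),
  let Aint := block_mx (A j) (B j *m Ch j) (Bh j *m Cm j) (Ah j) in
  let Bint := col_mx (B j *m Dh j) (Eh j) in
  [/\ TT.1 *m Aint = Ac *m TT.1 + Bc *m Cs j *m TT.2, TT.1 *m Bint = Bc,
      TT.2 *m Aint = As j *m TT.2, TT.2 *m Bint = 0 &
      row_mx (C j) 0 = Cc *m TT.1].
  move=> j; have [Tx [Tw [Px [Pw]]]] := hint j.
  move=> [_ [_ [_ [_ [_ [h1 [h2 [h3 [h4 h5]]]]]]]]].
  by exists (Tx, Tw).
move=> /fin_all_exists [TT hTT].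
pose w j k := col_mx (x j k) (xi j k).
have w_rec j k : w j k.+1 =
    block_mx (A j) (B j *m Ch j) (Bh j *m Cm j) (Ah j) *m w j k
    + col_mx (B j *m Dh j) (Eh j) *m (- (K *m eta j k)).
  rewrite /w hx hxi mul_block_col mul_col_mx add_col_mx; congr col_mx.
    by rewrite mulmxBr mulmxN !mulmxA addrA.
  by rewrite mulmxN !mulmxA [Bh j *m Cm j *m x j k + _]addrC.
pose xb j k := (TT j).1 *m w j k.
pose om j k := (TT j).2 *m w j k.
have om_rec j k : om j k.+1 = As j *m om j k.
  have [_ _ h3 h4 _] := hTT j.
  by rewrite /om w_rec mulmxDr !mulmxA h3 h4 mul0mx addr0.
have xb_rec j k : xb j k.+1 = Ac *m xb j k + Bc *m (Cs j *m om j k) - Bc *m (K *m eta j k).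
  have [h1 h2 _ _ _] := hTT j.
  by rewrite /xb /om w_rec mulmxDr !mulmxA h1 mulmxDl h2 mulmxN !mulmxA.
have yE j k : y j k = Cc *m xb j k.
  have [_ _ _ _ h5] := hTT j.
  by rewrite /y /xb /w mulmxA -h5 mul_row_col mul0mx addr0.
pose dd j k := Cs j *m om j k.
pose xt j k := xb j k - xc k.
have xt_rec j k : xt j k.+1 = Ac *m xt j k - Bc *m K *m eta j k + Bc *m dd j k.
  rewrite /xt xb_rec xc_rec mulmxBr -!mulmxA /dd.
  by rewrite addrAC (addrAC (Ac *m xb j k)) addrAC.
have yxt j k : y j k - yr k = Cc *m xt j k by rewrite yE yrE /xt mulmxBr.
have ddE j k : dd j k = Cs j *m om j k by [].
clearbody dd xt.
clearbody w xb om.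
pose Mm := 1%:M - Dbar a Cset.
have sumM (v : 'I_N -> 'cV[R]_nc) j :
    \sum_l Mm j l *: v l = v j - \sum_l Dbar a Cset j l *: v l.
  have Mm_e l : Mm j l = (j == l)%:R - Dbar a Cset j l.
    by rewrite /Mm [LHS]mxE [X in X + _]mxE [X in _ + X]mxE.
  under eq_bigr do rewrite Mm_e scalerBl.
  rewrite sumrB; congr (_ - _).
  rewrite (bigD1 j) //= eqxx scale1r big1 ?addr0 // => l /negPf.
  by rewrite eq_sym => ->; rewrite scale0r.
have zc k j : zeta_check a Cset (fun l => eta l k) j = \sum_l Mm j l *: eta l k.
  by rewrite sumM.
have zb k j : zeta_bar a Cset (fun l => y l k) (yr k) j = Cc *m \sum_l Mm j l *: xt l k.
  pose g l := Cc *m xt l k.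
  have hgl l : y l k - yr k = g l := yxt l k.
  have hdelta (F : 'I_N -> 'cV[R]_p) : \sum_l (j == l)%:R *: F l = F j.
    rewrite (bigD1 j) //= eqxx scale1r big1 ?addr0 //.
    by move=> l /negPf; rewrite eq_sym => ->; rewrite scale0r.
  rewrite /zeta_bar.
  have -> : \sum_l a j l *: (y j k - y l k) = \sum_l a j l *: (g j - g l).
    apply: eq_bigr => l _; rewrite -!hgl; congr (_ *: _).
    by rewrite opprB addrA subrK.
  rewrite hgl mulmx_sumr.
  under [RHS]eq_bigr do rewrite -scalemxAr /Mm (M_entry Cset a0) -scalerA -/(g _).
  rewrite -scaler_sumr; congr (_ *: _).
  under [RHS]eq_bigr do rewrite (Lbar_entry Cset aii) scalerBl -scalerA.
  rewrite sumrB hdelta.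
  under eq_bigr do rewrite scalerBr.
  by rewrite sumrB -scaler_suml scalerDl addrAC.
pose SX k j := \sum_l Mm j l *: xt l k.
pose SE k j := \sum_l Mm j l *: eta l k.
pose SD k j := \sum_l Mm j l *: dd l k.
have SX_rec k j : SX k.+1 j = Ac *m SX k j - Bc *m K *m SE k j + Bc *m SD k j.
  rewrite /SX; under eq_bigr do rewrite xt_rec scalerDr scalerBr !scalemxAr.
  by rewrite !big_split /= sumrN -!mulmx_sumr.
pose e j k := xh j k - SX k j.
have e_rec j k : e j k.+1 = (Ac - H *m Cc) *m e j k + - (Bc *m SD k j).
  rewrite /e hxh zb zc SX_rec -/(SX k j) -/(SE k j).
  rewrite !mulmxBr !mulmxBl ?mulmxA; exact: mx_id_e.
pose dl j k := xt j k - eta j k.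
have SDl k j : \sum_l Dbar a Cset j l *: dl l k = dl j k - (SX k j - SE k j).
  apply/eqP; rewrite eq_sym subr_eq addrC -subr_eq -sumM; apply/eqP.
  rewrite /SX /SE -sumrB; apply: eq_bigr => l _; by rewrite scalerBr.
have dl_rec j k : dl j k.+1 =
    Ac *m (\sum_l Dbar a Cset j l *: dl l k) + (Bc *m dd j k - Ac *m e j k).
  rewrite SDl /dl xt_rec heta zc -/(SE k j) /e.
  rewrite !mulmxBr !mulmxBl ?mulmxA; exact: mx_id_dl.
have xt_rec2 j k : xt j k.+1 = (Ac - Bc *m K) *m xt j k + (Bc *m K *m dl j k + Bc *m dd j k).
  rewrite xt_rec /dl !mulmxBr !mulmxBl ?mulmxA; exact: mx_id_xt.
have SDE k j : SD k j = \sum_l Mm j l *: dd l k by [].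
clearbody SX SE SD e dl.
have om0 j : RN (om j).
  apply: (RN_schur (eAs j) (w := fun _ => 0)); last exact: RN0.
  by move=> k; rewrite om_rec addr0.
have dd0 j : RN (dd j) by apply: (RN_ext (ddE j)); exact: RNM (om0 j).
have e0 j : RN (e j).
  apply: (RN_schur eH (e_rec j)); apply: RNN; apply: RNM.
  apply: (RN_ext (fun k => SDE k j)); apply: RN_sum => l; exact: RNZ.
set D := Dbar a Cset in eD dl_rec *.
clearbody D.
pose Dl k := \matrix_(rr, l) dl l k rr 0 : 'M[R]_(nc, N).
pose Wd k := \matrix_(rr, l) (Bc *m dd l k - Ac *m e l k) rr 0 : 'M[R]_(nc, N).
have Dl_rec k : Dl k.+1 = Ac *m Dl k *m D^T + Wd k.
  have colD l : col l (Dl k *m D^T) = \sum_j D l j *: dl j k.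
    apply/colP => rr; rewrite !mxE summxE; apply: eq_bigr => j _.
    by rewrite !mxE mulrC.
  have AX (X : 'M[R]_(nc, N)) rr l : (Ac *m X) rr l = (Ac *m col l X) rr 0.
    by rewrite !mxE; apply: eq_bigr => j _; rewrite mxE.
  apply/matrixP => rr l; rewrite -mulmxA [in RHS]mxE AX colD.
  by rewrite [Dl k.+1 rr l]mxE dl_rec [in LHS]mxE [Wd k rr l]mxE.
have hDl : mnull (fun k => mxC (Dl k)).
  apply: (kron_null eAc eD (W := fun k => mxC (Wd k))).
    by move=> k; rewrite Dl_rec mxCD !mxCM mxC_tr.
  move=> rr l; have := (RNB (RNM Bc (dd0 l)) (RNM Ac (e0 l))) rr 0.
  by apply: cnull_ext => k; rewrite !mxE.
have dl0 j : RN (dl j).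
  move=> rr c; rewrite (ord1 c); have := hDl rr j.
  by apply: cnull_ext => k; rewrite !mxE.
have xt0 j : RN (xt j).
  apply: (RN_schur eK (xt_rec2 j)); apply: RND; apply: RNM; [exact: dl0|exact: dd0].
apply: mnull_cvg; apply: (RN_ext (yxt i0)); exact: RNM (xt0 i0).
Qed.
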